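(* Let $\mathcal M$ be an oriented matroid on ground set $E$ and $e\in E$. (1) If $e$ is a loop, then $\mathcal M$ is pure if and only if $\mathcal M\setminus e$ is pure. (2) If $e$ is a coloop, then $\mathcal M$ is pure if and only if $\mathcal M/e$ is pure.
   Context: Oriented matroids are given by signed circuits $X=(X^+,X^-)$ on $E$. $e$ is a loop if $(\{e\},\emptyset)$ is a circuit; $e$ is a coloop if $e$ lies in the support $X^+\cup X^-$ of no circuit. Deletion $\mathcal M\setminus e$: circuits of $\mathcal M$ not containing $e$ in their support, on ground set $E\setminus\{e\}$. Contraction $\mathcal M/e$ (for $e$ not a loop): the circuits are the inclusion-minimal (w.r.t. $Y\le X$ iff $Y^+\subseteq X^+$ and $Y^-\subseteq X^-$) nonempty signed sets among $(X^+\setminus\{e\},X^-\setminus\{e\})$, $X$ a circuit of $\mathcal M$. Two subsets $I,J$ are separated if no circuit $X$ satisfies $X^+\subseteq I\setminus J$, $X^-\subseteq J\setminus I$; an oriented matroid is pure if every pairwise-separated collection maximal by inclusion has the maximum possible cardinality. *)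

(* Defs.v *)
From mathcomp Require Import all_boot.
Set Implicit Arguments. Unset Strict Implicit. Unset Printing Implicit Defensive.

(* A signed set X = (X^+, X^-). *)
Definition signed (T : finType) := ({set T} * {set T})%type.

Section OM.
Variable T : finType.

Definition supp (X : signed T) : {set T} := X.1 :|: X.2.
Definition negs (X : signed T) : signed T := (X.2, X.1).
Definition empty_signed : signed T := (set0, set0).

Definition conf (Y X : signed T) : bool := (Y.1 \subset X.1) && (Y.2 \subset X.2).

Definition is_OM (E : {set T}) (C : {set signed T}) : Prop :=
  [/\ (forall X, X \in C -> [disjoint X.1 & X.2] /\ supp X \subset E),
      empty_signed \notin C,
      (forall X, X \in C -> negs X \in C),
      (forall X Y, X \in C -> Y \in C -> supp X \subset supp Y ->
                   X = Y \/ X = negs Y) &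
      (forall X Y f, X \in C -> Y \in C -> X <> negs Y ->
                   f \in X.1 :&: Y.2 ->
                   exists2 Z, Z \in C &
                     (Z.1 \subset (X.1 :|: Y.1) :\ f) /\
                     (Z.2 \subset (X.2 :|: Y.2) :\ f))].

Definition is_loop (C : {set signed T}) (e : T) : bool := ([set e], set0) \in C.
Definition is_coloop (C : {set signed T}) (e : T) : bool :=
  [forall X in C, e \notin supp X].

Definition deletion (C : {set signed T}) (e : T) : {set signed T} :=
  [set X in C | e \notin supp X].

Definition restr_e (C : {set signed T}) (e : T) : {set signed T} :=
  [set (X.1 :\ e, X.2 :\ e) | X in C].
Definition contraction (C : {set signed T}) (e : T) : {set signed T} :=
  [set Y in restr_e C e | (Y != empty_signed) &&
     [forall Z in restr_e C e, ((Z != empty_signed) && conf Z Y) ==> (Z == Y)]].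

Definition separated (C : {set signed T}) (I J : {set T}) : bool :=
  ~~ [exists X in C, (X.1 \subset I :\: J) && (X.2 \subset J :\: I)].

Definition pw_separated (E : {set T}) (C : {set signed T}) (S : {set {set T}}) : bool :=
  (S \subset powerset E) && [forall I in S, forall J in S, separated C I J].

Definition pure (E : {set T}) (C : {set signed T}) : Prop :=
  forall S, maxset (pw_separated E C) S ->
    forall S', pw_separated E C S' -> #|S'| <= #|S|.

End OM.

(* Main.v *)
Require Import Defs.
From mathcomp Require Import all_boot.

Lemma pure_transfer (U : finType) (A B : pred {set U}) (k : nat)
  (Phi Psi : {set U} -> {set U}) : 0 < k ->
  (forall S, A S -> B (Psi S) /\ #|S| <= k * #|Psi S|) ->
  (forall S, maxset A S -> maxset B (Psi S) /\ #|S| = k * #|Psi S|) ->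
  (forall S, B S -> A (Phi S) /\ #|Phi S| = k * #|S|) ->
  (forall S, maxset B S -> maxset A (Phi S)) ->
  (forall S, maxset A S -> forall S', A S' -> #|S'| <= #|S|) <->
  (forall S, maxset B S -> forall S', B S' -> #|S'| <= #|S|).
Proof.
move=> k0 HA HAm HB HBm; split=> H S mS S' pS'.
- have [pS _] := maxsetP mS.
  have [_ c1] := HB _ pS; have [_ c2] := HB _ pS'.
  have := H _ (HBm _ mS) _ (HB _ pS').1.
  by rewrite c1 c2 leq_pmul2l.
- have [m1 c1] := HAm _ mS; have [p2 c2] := HA _ pS'.
  apply: leq_trans c2 _; rewrite c1 leq_pmul2l //; exact: H.
Qed.

Lemma rmN (T : finType) (e : T) (K : {set T}) : e \notin K -> K :\ e = K.
Proof. by move=> h; apply/setP=> y; rewrite !inE; case: eqP => // ->; rewrite (negbTE h). Qed.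

Lemma eq_rm (T : finType) (e : T) (I J : {set T}) :
  (e \in I) = (e \in J) -> I :\ e = J :\ e -> I = J.
Proof.
move=> hIJ /setP h; apply/setP=> x; have := h x; rewrite !inE.
by case: (x =P e) => [->|].
Qed.

Lemma sub_rm (T : finType) (e : T) (A I J : {set T}) :
  e \notin A -> A \subset I :\: J -> A \subset (I :\ e) :\: (J :\ e).
Proof.
move=> nA /subsetP h; apply/subsetP=> x xA; have := h x xA; rewrite !inE.
by have -> : x != e by apply: contraNneq nA => <-.
Qed.

Lemma rm_sub (T : finType) (e : T) (I J : {set T}) :
  (I :\ e) :\: (J :\ e) \subset I :\: J.
Proof. by apply/subsetP=> x; rewrite !inE; case: (x =P e). Qed.

Lemma pwP (T : finType) (E : {set T}) (C : {set signed T}) (S : {set {set T}}) :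
  reflect ((forall I, I \in S -> I \subset E) /\
           (forall I J, I \in S -> J \in S -> separated C I J))
          (pw_separated E C S).
Proof.
apply: (iffP andP) => [[/subsetP h1 /forallP h2]|[h1 h2]]; split.
- by move=> I /h1; rewrite powersetE.
- by move=> I J IS JS; have /implyP/(_ IS)/forallP/(_ J)/implyP/(_ JS) := h2 I.
- by apply/subsetP=> I /h1; rewrite powersetE.
- by apply/forallP=> I; apply/implyP=> IS; apply/forallP=> J; apply/implyP=> JS; apply: h2.
Qed.

Lemma sep_mono (T : finType) (C C' : {set signed T}) (I J I' J' : {set T}) :
  C' \subset C -> I' :\: J' \subset I :\: J -> J' :\: I' \subset J :\: I ->
  separated C I J -> separated C' I' J'.
Proof.
rewrite /separated => sC s1 s2; apply: contra => /existsP[X /andP[XC /andP[h1 h2]]].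
apply/existsP; exists X.
by rewrite (subsetP sC _ XC) (subset_trans h1 s1) (subset_trans h2 s2).
Qed.

Lemma sep_rm (T : finType) (C C' : {set signed T}) (e : T) (I J : {set T}) :
  C' \subset C -> separated C I J -> separated C' (I :\ e) (J :\ e).
Proof. by move=> sC; apply: sep_mono => //; apply: rm_sub. Qed.

Lemma sep_up (T : finType) (C C' : {set signed T}) (e : T) (I J : {set T}) :
  (forall X, X \in C -> X.1 \subset I :\: J -> X.2 \subset J :\: I ->
     [/\ X \in C', e \notin X.1 & e \notin X.2]) ->
  separated C' (I :\ e) (J :\ e) -> separated C I J.
Proof.
move=> H; apply: contra => /existsP[X /andP[XC /andP[h1 h2]]].
have [XC' n1 n2] := H X XC h1 h2.
by apply/existsP; exists X; rewrite XC' !sub_rm.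
Qed.

Lemma sep_del_up (T : finType) (C : {set signed T}) (e : T) (I J : {set T}) :
  (e \in I) = (e \in J) ->
  separated (deletion C e) (I :\ e) (J :\ e) -> separated C I J.
Proof.
move=> hIJ; apply: sep_up => X XC h1 h2.
have n1 : e \notin X.1.
  apply/negP=> /(subsetP h1); rewrite inE hIJ; by case: (e \in J).
have n2 : e \notin X.2.
  apply/negP=> /(subsetP h2); rewrite inE hIJ; by case: (e \in J).
by split=> //; rewrite inE XC /supp inE negb_or n1 n2.
Qed.

Lemma nonempty_max (T : finType) (E : {set T}) (C : {set signed T}) (S : {set {set T}}) :
  empty_signed T \notin C -> maxset (pw_separated E C) S -> exists I0, I0 \in S.
Proof.
move=> nE /maxsetP[_ H].
case: (set_0Vmem S) => [S0|[x xS]]; last by exists x.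
exfalso.
have p1 : pw_separated E C [set set0].
  apply/pwP; split=> [I|I J]; rewrite !inE => /eqP-> //; first by rewrite sub0set.
  move=> /eqP->; apply/negP=> /existsP[X /andP[XC /andP[h1 h2]]].
  move: h1 h2; rewrite setD0 !subset0 => /eqP h1 /eqP h2.
  have eX : X = empty_signed T by case: X XC h1 h2 => ? ? /= _ -> ->.
  by move: XC; rewrite eX (negbTE nE).
have := H _ p1; rewrite S0 sub0set => /(_ isT) /setP /(_ set0).
  by rewrite !inE eqxx.
Qed.

Lemma same_e (T : finType) (E : {set T}) (C : {set signed T}) (e : T) (I J : {set T}) :
  is_OM E C -> is_loop C e -> separated C I J -> (e \in I) = (e \in J).
Proof.
case=> _ _ hneg _ _ L0.
have L : ([set e], set0) \in C := L0.
have L' := hneg _ L.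
case eI: (e \in I); case eJ: (e \in J) => //; move/negP; case; apply/existsP.
- by exists ([set e], set0); rewrite L /= sub0set sub1set inE eI eJ.
- by exists (negs ([set e], set0)); rewrite L' /= sub0set sub1set inE eI eJ.
Qed.

Arguments same_e {T E C e I J}.
Arguments nonempty_max {T E C S}.

Lemma del_sub (T : finType) (C : {set signed T}) (e : T) : deletion C e \subset C.
Proof. by apply/subsetP=> X; rewrite inE => /andP[]. Qed.

Lemma part1 (T : finType) (E : {set T}) (C : {set signed T}) (e : T) :
  is_OM E C -> e \in E -> is_loop C e ->
  (pure E C <-> pure (E :\ e) (deletion C e)).
Proof.
move=> OM eE L.
have nE : empty_signed T \notin C by case: OM.
have nEd : empty_signed T \notin deletion C e.
  by apply/negP=> /(subsetP (@del_sub _ C e)); apply/negP.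
set Psi := fun S : {set {set T}} => [set I :\ e | I in S].
have injS : forall S, pw_separated E C S -> {in S &, injective (fun I => I :\ e)}.
  move=> S /pwP[_ h] I J IS JS; apply: eq_rm; exact: same_e OM L (h _ _ IS JS).
have HA : forall S, pw_separated E C S ->
    pw_separated (E :\ e) (deletion C e) (Psi S) /\ #|S| <= 1 * #|Psi S|.
  move=> S pS; split; last by rewrite mul1n card_in_imset //; apply: injS.
  move/pwP: pS => [h1 h2]; apply/pwP; split.
  - by move=> _ /imsetP[I IS ->]; apply: setSD; apply: h1.
  - move=> _ _ /imsetP[I IS ->] /imsetP[J JS ->].
    by apply: sep_rm (@del_sub _ C e) (h2 _ _ IS JS).
have HB : forall S, pw_separated (E :\ e) (deletion C e) S ->
    pw_separated E C S /\ #|S| = 1 * #|S|.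
  move=> S /pwP[h1 h2]; split; last by rewrite mul1n.
  apply/pwP; split.
  - by move=> I /h1 /subset_trans; apply; apply: subD1set.
  - move=> I J IS JS.
    have nI : e \notin I by apply/negP=> /(subsetP (h1 _ IS)); rewrite !inE eqxx.
    have nJ : e \notin J by apply/negP=> /(subsetP (h1 _ JS)); rewrite !inE eqxx.
    apply: (@sep_del_up _ _ e); first by rewrite (negbTE nI) (negbTE nJ).
    by rewrite !rmN //; apply: h2.
apply: (@pure_transfer _ _ _ 1 id Psi) => //.
- move=> S mS; have [pS _] := maxsetP mS.
  split; last by rewrite mul1n card_in_imset //; apply: injS.
  have [I0 I0S] := nonempty_max nE mS.
  set b := e \in I0.
  set lft := fun K : {set T} => if b then e |: K else K.
  have [pPsi _] := HA _ pS.
  apply/maxsetP; split=> // B pB sB.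
  have nB : forall K, K \in B -> e \notin K.
    move/pwP: pB => [h1 _] K KB.
    by apply/negP=> /(subsetP (h1 _ KB)); rewrite !inE eqxx.
  have lftK : forall K, K \in B -> lft K :\ e = K.
    by move=> K KB; rewrite /lft; case: ifP => _; [rewrite setU1K | rewrite rmN]; rewrite ?nB.
  have elft : forall K, K \in B -> (e \in lft K) = b.
    move=> K KB; rewrite /lft; case: ifP => hb; first by rewrite setU11.
    by rewrite (negbTE (nB _ KB)).
  have pL : pw_separated E C [set lft K | K in B].
    move/pwP: pB => [h1 h2]; apply/pwP; split.
    - move=> _ /imsetP[K KB ->]; have sK := subset_trans (h1 _ KB) (subD1set E e).
      by rewrite /lft; case: ifP => _ //; rewrite subUset sub1set eE sK.
    - move=> _ _ /imsetP[K KB ->] /imsetP[K' KB' ->].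
      apply: (@sep_del_up _ _ e); first by rewrite !elft.
      by rewrite !lftK //; apply: h2.
  have sL : S \subset [set lft K | K in B].
    apply/subsetP=> I IS; apply/imsetP; exists (I :\ e).
      by apply: (subsetP sB); apply: imset_f.
    have eI : (e \in I) = b.
      by move/pwP: pS => [_ h2]; apply: same_e OM L (h2 _ _ IS I0S).
    rewrite /lft; case: ifP => hb; rewrite hb in eI; first by rewrite setD1K.
    by rewrite rmN // eI.
  have eL := (maxsetP mS).2 _ pL sL.
  rewrite -eL /Psi -imset_comp.
  by rewrite (eq_in_imset (g := id)) ?imset_id //.
- move=> S mS; have [pS _] := maxsetP mS.
  have [I0 I0S] := nonempty_max nEd mS.
  have [pC _] := HB _ pS.
  apply/maxsetP; split=> // B pB sB.
  have nS : forall K, K \in S -> e \notin K.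
    move/pwP: pS => [h1 _] K KS.
    by apply/negP=> /(subsetP (h1 _ KS)); rewrite !inE eqxx.
  have nB : forall K, K \in B -> e \notin K.
    move=> K KB; have := nS _ I0S; apply: contra => eK.
    move/pwP: pB => [_ h2]; rewrite -(same_e OM L (h2 _ _ KB (subsetP sB _ I0S))).
    exact: eK.
  have [pPB _] := HA _ pB.
  have sP : S \subset Psi B.
    by apply/subsetP=> K KS; apply/imsetP; exists K; [apply: (subsetP sB) | rewrite rmN ?nS].
  have ePB := (maxsetP mS).2 _ pPB sP.
  apply/eqP; rewrite eqEsubset sB andbT; apply/subsetP=> K KB.
  by rewrite -ePB; apply/imsetP; exists K => //; rewrite rmN ?nB.
Qed.

Lemma contr_coloop (T : finType) (E : {set T}) (C : {set signed T}) (e : T) :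
  is_OM E C -> is_coloop C e -> contraction C e = C.
Proof.
case=> hdis nE _ hsup _ /forallP hc.
have nX : forall X, X \in C -> e \notin supp X.
  by move=> X XC; have /implyP := hc X; apply.
have rC : restr_e C e = C.
  rewrite /restr_e (eq_in_imset (g := id)) ?imset_id // => X XC.
  have := nX X XC; rewrite /supp inE negb_or => /andP[n1 n2].
  by rewrite !rmN //; case: X {XC} n1 n2.
rewrite /contraction rC; apply/setP=> Y; rewrite inE.
case YC: (Y \in C) => //=.
have -> : (Y != empty_signed T) by apply: contraNneq nE => <-.
apply/forallP=> Z; apply/implyP=> ZC; apply/implyP=> /andP[_ /andP[c1 c2]].
have sZY : supp Z \subset supp Y by rewrite /supp setUSS.
case: (hsup Z Y ZC YC sZY) => [->//|eZ].
exfalso; move: c1 c2; rewrite eZ /negs /= => c1 c2.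
have e12 : Y.1 = Y.2 by apply/eqP; rewrite eqEsubset c1 c2.
have [dY _] := hdis Y YC.
have Y1 : Y.1 = set0 by have := disjoint_setI0 dY; rewrite -e12 setIid.
have eY : Y = empty_signed T.
  by case: Y YC e12 Y1 {eZ dY c1 c2 sZY} => a b /= _ <- ->.
by move: nE; rewrite -eY YC.
Qed.

Lemma part2 (T : finType) (E : {set T}) (C : {set signed T}) (e : T) :
  e \in E -> (forall X, X \in C -> e \notin supp X) ->
  (pure E C <-> pure (E :\ e) C).
Proof.
move=> eE nX.
have sep2 : forall I J, separated C I J = separated C (I :\ e) (J :\ e).
  move=> I J; apply/idP/idP; first exact: sep_rm.
  apply: sep_up => X XC _ _; have := nX X XC.
  by rewrite /supp inE negb_or => /andP[].
set Psi := fun S : {set {set T}} => [set I :\ e | I in S].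
set Phi := fun S : {set {set T}} => S :|: [set e |: I | I in S].
have noe : forall S : {set {set T}}, pw_separated (E :\ e) C S ->
    forall K, K \in S -> e \notin K.
  move=> S /pwP[h1 _] K KS.
  by apply/negP=> /(subsetP (h1 _ KS)); rewrite !inE eqxx.
have cPhi : forall S : {set {set T}}, (forall K, K \in S -> e \notin K) ->
    #|Phi S| = 2 * #|S|.
  move=> S hS; rewrite /Phi cardsU card_in_imset; last first.
    move=> I J IS JS /(congr1 (fun A => A :\ e)).
    by rewrite !setU1K ?hS.
  have -> : S :&: [set e |: I | I in S] = set0.
    apply/setP=> K; rewrite !inE; apply/negP=> /andP[KS /imsetP[I _ eK]].
    by move: (hS _ KS); rewrite eK setU11.
  by rewrite cards0 subn0 mul2n addnn.
have PsiPhi : forall S : {set {set T}}, (forall K, K \in S -> e \notin K) ->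
    Psi (Phi S) = S.
  move=> S hS; rewrite /Psi /Phi imsetU -imset_comp.
  rewrite (eq_in_imset (f := (fun I => I :\ e) \o (setU [set e])) (g := id)); last first.
    by move=> K KS /=; rewrite setU1K ?hS.
  rewrite (eq_in_imset (f := fun I => I :\ e) (g := id)); last first.
    by move=> K KS /=; rewrite rmN ?hS.
  by rewrite imset_id setUid.
have sPP : forall S : {set {set T}}, S \subset Phi (Psi S).
  move=> S; apply/subsetP=> I IS; rewrite /Phi /Psi inE.
  case eI: (e \in I).
    by apply/orP; right; apply/imsetP; exists (I :\ e); [apply: imset_f | rewrite setD1K].
  by apply/orP; left; apply/imsetP; exists I; rewrite // rmN ?eI.
have PsinE : forall S : {set {set T}}, forall K, K \in Psi S -> e \notin K.
  by move=> S _ /imsetP[I _ ->]; rewrite !inE eqxx.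
have memPhi : forall S : {set {set T}}, (forall K, K \in S -> e \notin K) ->
    forall I, I \in Phi S -> I :\ e \in S.
  move=> S hS I; rewrite inE => /orP[IS|/imsetP[K KS ->]].
    by rewrite rmN ?hS.
  by rewrite setU1K ?hS.
have HB : forall S, pw_separated (E :\ e) C S ->
    pw_separated E C (Phi S) /\ #|Phi S| = 2 * #|S|.
  move=> S pS; split; last by apply: cPhi; apply: noe pS.
  have hS := noe _ pS; move/pwP: pS => [h1 h2]; apply/pwP; split.
  - move=> I; rewrite inE => /orP[IS|/imsetP[K KS ->]].
      exact: subset_trans (h1 _ IS) (subD1set E e).
    by rewrite subUset sub1set eE (subset_trans (h1 _ KS) (subD1set E e)).
  - move=> I J IP JP; rewrite sep2; apply: h2; exact: memPhi.
have HA : forall S, pw_separated E C S ->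
    pw_separated (E :\ e) C (Psi S) /\ #|S| <= 2 * #|Psi S|.
  move=> S pS; split.
    move/pwP: pS => [h1 h2]; apply/pwP; split.
    - by move=> _ /imsetP[I IS ->]; apply: setSD; apply: h1.
    - by move=> _ _ /imsetP[I IS ->] /imsetP[J JS ->]; rewrite -sep2; apply: h2.
  rewrite -(cPhi (Psi S) (PsinE S)).
  exact: subset_leq_card (sPP S).
apply: (@pure_transfer _ _ _ 2 Phi Psi) => //.
- move=> S mS; have [pS _] := maxsetP mS.
  have [pP _] := HA _ pS; have [pPP _] := HB _ pP.
  have ePP := (maxsetP mS).2 _ pPP (sPP S).
  split; last by rewrite -{1}ePP (cPhi (Psi S) (PsinE S)).
  apply/maxsetP; split=> // B pB sB.
  have [pPB _] := HB _ pB.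
  have sPB : S \subset Phi B.
    rewrite -ePP /Phi; apply: setUSS => //; exact: imsetS.
  have ePB := (maxsetP mS).2 _ pPB sPB.
  by rewrite -(PsiPhi B (noe _ pB)) ePB.
- move=> S mS; have [pS _] := maxsetP mS.
  have [pP _] := HB _ pS.
  apply/maxsetP; split=> // B pB sB.
  have [pPB _] := HA _ pB.
  have sPB : S \subset Psi B.
    by rewrite -{1}(PsiPhi S (noe _ pS)); apply: imsetS.
  have ePB := (maxsetP mS).2 _ pPB sPB.
  apply/eqP; rewrite eqEsubset sB andbT.
  by rewrite -ePB; apply: sPP.
Qed.

Theorem lemma8p1 (T : finType) (E : {set T}) (C : {set signed T}) (e : T) :
  is_OM E C -> e \in E ->
  (is_loop C e -> (pure E C <-> pure (E :\ e) (deletion C e))) /\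
  (is_coloop C e -> (pure E C <-> pure (E :\ e) (contraction C e))).
Proof.
move=> OM eE; split; first exact: (@part1 _ _ _ _ OM eE).
move=> col; rewrite (@contr_coloop _ _ _ _ OM col); apply: part2 => // X XC.
by move/forallP: col => /(_ X) /implyP; apply.
Qed.
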